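(* Let $H$ be a complex Hilbert space with $\dim H\geq 2$, $\mathcal{A}\subseteq\mathcal{B}(H)$ a standard operator algebra, $r,s$ nonnegative integers with $r+s\geq1$, and $A\in\mathcal{A}$ nonzero. The following are equivalent: (1) $A$ has rank one; (2) for every $B\in\mathcal{A}$, $\sigma_\pi(B^rA^*B^s)$ is a singleton; (3) for every $B\in\mathcal{A}$ with $\operatorname{rank}(B)\leq2$, $\sigma_\pi(B^rA^*B^s)$ is a singleton.
   Context: A standard operator algebra on a complex Hilbert space $H$ is a subalgebra of $\mathcal{B}(H)$ containing all finite rank operators; it need not be closed or unital. $A^*$ is the Hilbert-space adjoint. The peripheral spectrum of $T$ is $\sigma_\pi(T)=\{z\in\sigma(T):|z|=r(T)\}$, where $r(T)$ is the spectral radius. *)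

(* Defs.v *)
From Stdlib Require Import Reals List ClassicalEpsilon.
Open Scope R_scope.
Set Implicit Arguments.

Definition C := (R * R)%type.
Definition C0 : C := (0, 0).
Definition C1 : C := (1, 0).
Definition Cadd (a b : C) : C := (fst a + fst b, snd a + snd b).
Definition Cmul (a b : C) : C :=
  (fst a * fst b - snd a * snd b, fst a * snd b + snd a * fst b).
Definition Copp (a : C) : C := (- fst a, - snd a).
Definition Cconj (a : C) : C := (fst a, - snd a).
Definition Cnorm (a : C) : R := sqrt (fst a * fst a + snd a * snd a).

Record CHilbert := {
  hv :> Type;
  hzero : hv;
  hadd : hv -> hv -> hv;
  hopp : hv -> hv;
  hscal : C -> hv -> hv;
  hinner : hv -> hv -> C;
  hadd_assoc : forall x y z, hadd x (hadd y z) = hadd (hadd x y) z;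
  hadd_comm : forall x y, hadd x y = hadd y x;
  hadd_0 : forall x, hadd x hzero = x;
  hadd_opp : forall x, hadd x (hopp x) = hzero;
  hscal_1 : forall x, hscal C1 x = x;
  hscal_assoc : forall a b x, hscal a (hscal b x) = hscal (Cmul a b) x;
  hscal_addv : forall a x y, hscal a (hadd x y) = hadd (hscal a x) (hscal a y);
  hscal_adds : forall a b x, hscal (Cadd a b) x = hadd (hscal a x) (hscal b x);
  hinner_addl : forall x y z, hinner (hadd x y) z = Cadd (hinner x z) (hinner y z);
  hinner_scall : forall a x y, hinner (hscal a x) y = Cmul a (hinner x y);
  hinner_conj : forall x y, hinner y x = Cconj (hinner x y);
  hinner_pos : forall x, 0 <= fst (hinner x x);
  hinner_def : forall x, hinner x x = C0 -> x = hzero;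
  hcomplete : forall u : nat -> hv,
    (forall eps, 0 < eps -> exists N, forall m n, (N <= m)%nat -> (N <= n)%nat ->
        sqrt (fst (hinner (hadd (u m) (hopp (u n))) (hadd (u m) (hopp (u n))))) < eps) ->
    exists l, forall eps, 0 < eps -> exists N, forall n, (N <= n)%nat ->
        sqrt (fst (hinner (hadd (u n) (hopp l)) (hadd (u n) (hopp l)))) < eps
}.

Section Ops.
Variable H : CHilbert.

Definition hnorm (x : H) : R := sqrt (fst (hinner H x x)).

Definition dim_ge2 : Prop :=
  exists x y : H, forall a b : C,
    hadd H (hscal H a x) (hscal H b y) = hzero H -> a = C0 /\ b = C0.

Definition linear_op (T : H -> H) : Prop :=
  (forall x y, T (hadd H x y) = hadd H (T x) (T y)) /\
  (forall a x, T (hscal H a x) = hscal H a (T x)).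

Definition bounded_op (T : H -> H) : Prop :=
  linear_op T /\ exists M, forall x, hnorm (T x) <= M * hnorm x.

Fixpoint lincomb (cs : list C) (ys : list H) : H :=
  match cs, ys with
  | c :: cs', y :: ys' => hadd H (hscal H c y) (lincomb cs' ys')
  | _, _ => hzero H
  end.

Definition rank_le (n : nat) (T : H -> H) : Prop :=
  exists ys : list H, length ys = n /\
    forall x, exists cs : list C, length cs = n /\ T x = lincomb cs ys.

Definition finite_rank (T : H -> H) : Prop := exists n, rank_le n T.

Definition rank_one (T : H -> H) : Prop := rank_le 1 T /\ ~ rank_le 0 T.

(* standard operator algebra: a complex subalgebra of B(H) containing
   all finite rank operators (not necessarily closed or unital) *)
Definition standard_op_alg (Alg : (H -> H) -> Prop) : Prop :=
  (forall T, Alg T -> bounded_op T) /\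
  (forall T S, Alg T -> Alg S -> Alg (fun x => hadd H (T x) (S x))) /\
  (forall a T, Alg T -> Alg (fun x => hscal H a (T x))) /\
  (forall T S, Alg T -> Alg S -> Alg (fun x => T (S x))) /\
  (forall T, bounded_op T -> finite_rank T -> Alg T).

Definition is_adjoint (T S : H -> H) : Prop :=
  forall x y, hinner H (T x) y = hinner H x (S y).

Definition adjoint (T : H -> H) : H -> H :=
  epsilon (inhabits (fun x : H => x)) (fun S => is_adjoint T S).

Fixpoint opow (n : nat) (T : H -> H) : H -> H :=
  match n with
  | O => fun x => x
  | S n' => fun x => T (opow n' T x)
  end.

Definition spectrum (T : H -> H) (z : C) : Prop :=
  ~ exists S : H -> H, bounded_op S /\
      (forall x, S (hadd H (T x) (hopp H (hscal H z x))) = x) /\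
      (forall x, hadd H (T (S x)) (hopp H (hscal H z (S x))) = x).

Definition spectral_radius (T : H -> H) (rho : R) : Prop :=
  is_lub (fun t => exists w, spectrum T w /\ t = Cnorm w) rho.

Definition periph_spectrum (T : H -> H) (z : C) : Prop :=
  spectrum T z /\ spectral_radius T (Cnorm z).

Definition periph_singleton (T : H -> H) : Prop :=
  exists z, forall w, periph_spectrum T w <-> w = z.

End Ops.

(* Main.v *)
Require Import Defs.
From Stdlib Require Import Reals List ClassicalEpsilon Lra Psatz Field Ring.
Open Scope R_scope.
Import ListNotations.


Notation CC := Defs.C.
Notation C1 := Defs.C1.
Notation C0 := Defs.C0.

Lemma Ceq (a b : CC) : fst a = fst b -> snd a = snd b -> a = b.
Proof. destruct a, b; simpl; intros; subst; reflexivity. Qed.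

Definition Csub (a b : CC) : CC := Cadd a (Copp b).
Definition Cinv (a : CC) : CC :=
  (fst a / (fst a * fst a + snd a * snd a), - snd a / (fst a * fst a + snd a * snd a)).
Definition Cdiv (a b : CC) : CC := Cmul a (Cinv b).

Lemma Cring : ring_theory C0 C1 Cadd Cmul Csub Copp (@eq CC).
Proof.
  constructor; intros; apply Ceq; unfold Cadd, Cmul, Csub, Copp, C0, C1; simpl; ring.
Qed.

Lemma C1_neq_C0 : C1 <> C0.
Proof. unfold C1, C0; intro h; injection h; lra. Qed.

Lemma Cnz_sq (a : CC) : a <> C0 -> fst a * fst a + snd a * snd a <> 0.
Proof.
  destruct a as [x y]; simpl; intros h e. apply h.
  assert (x = 0) by nra. assert (y = 0) by nra. subst; reflexivity.
Qed.

Lemma Cfield : field_theory C0 C1 Cadd Cmul Csub Copp Cdiv Cinv (@eq CC).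
Proof.
  constructor.
  - exact Cring.
  - exact C1_neq_C0.
  - reflexivity.
  - intros p hp. pose proof (Cnz_sq p hp) as hn.
    destruct p as [x y]; simpl in *. apply Ceq; unfold Cmul, Cinv, C1; simpl; field; auto.
Qed.

Add Field Cfield_inst : Cfield.

Lemma Cconj_add a b : Cconj (Cadd a b) = Cadd (Cconj a) (Cconj b).
Proof. apply Ceq; simpl; ring. Qed.
Lemma Cconj_mul a b : Cconj (Cmul a b) = Cmul (Cconj a) (Cconj b).
Proof. apply Ceq; simpl; ring. Qed.
Lemma Cconj_opp a : Cconj (Copp a) = Copp (Cconj a).
Proof. apply Ceq; simpl; ring. Qed.
Lemma Cconj_invol a : Cconj (Cconj a) = a.
Proof. apply Ceq; simpl; ring. Qed.
Lemma Cconj_0 : Cconj C0 = C0.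
Proof. apply Ceq; simpl; ring. Qed.
Lemma Cconj_1 : Cconj C1 = C1.
Proof. apply Ceq; simpl; ring. Qed.
Lemma Cconj_inv a : Cconj (Cinv a) = Cinv (Cconj a).
Proof. destruct a as [x y]; apply Ceq; unfold Cinv; simpl;
  replace ((-y)*(-y)) with (y*y) by ring; unfold Rdiv; ring. Qed.

Definition RC (r : R) : CC := (r, 0).

Lemma Cnorm_sq a : Cnorm a * Cnorm a = fst a * fst a + snd a * snd a.
Proof. unfold Cnorm. apply sqrt_sqrt. nra. Qed.
Lemma Cnorm_ge0 a : 0 <= Cnorm a.
Proof. apply sqrt_pos. Qed.
Lemma Cnorm_mul a b : Cnorm (Cmul a b) = Cnorm a * Cnorm b.
Proof.
  unfold Cnorm; rewrite <- sqrt_mult by nra. f_equal. destruct a, b; simpl; ring.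
Qed.
Lemma Cnorm_conj a : Cnorm (Cconj a) = Cnorm a.
Proof. unfold Cnorm; destruct a; simpl; f_equal; ring. Qed.
Lemma Cnorm_opp a : Cnorm (Copp a) = Cnorm a.
Proof. unfold Cnorm; destruct a; simpl; f_equal; ring. Qed.
Lemma Cnorm_0 : Cnorm C0 = 0.
Proof. unfold Cnorm; simpl. replace (0*0+0*0) with 0 by ring. apply sqrt_0. Qed.
Lemma Cnorm_eq0 a : Cnorm a = 0 -> a = C0.
Proof.
  intro h. pose proof (Cnorm_sq a) as e. rewrite h in e. destruct a as [x y]; simpl in *.
  assert (x = 0) by nra. assert (y = 0) by nra. subst; reflexivity.
Qed.
Lemma Cnorm_triangle a b : Cnorm (Cadd a b) <= Cnorm a + Cnorm b.
Proof.
  pose proof (Cnorm_sq a); pose proof (Cnorm_sq b); pose proof (Cnorm_sq (Cadd a b)).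
  pose proof (Cnorm_ge0 a); pose proof (Cnorm_ge0 b); pose proof (Cnorm_ge0 (Cadd a b)).
  destruct a as [x y], b as [u v]; simpl in *.
  set (p := Cnorm (x,y)) in *. set (q := Cnorm (u,v)) in *. set (t := Cnorm (x+u,y+v)) in *.
  assert (x*u + y*v <= p*q).
  { assert ((x*u+y*v)*(x*u+y*v) <= (p*q)*(p*q)).
    { replace ((p*q)*(p*q)) with ((p*p)*(q*q)) by ring. rewrite H, H0. pose proof (pow2_ge_0 (x*v-y*u)). nra. }
    assert (0 <= p*q) by nra. nra. }
  nra.
Qed.
Lemma Cnorm_RC r : 0 <= r -> Cnorm (RC r) = r.
Proof. intro h. unfold Cnorm, RC; simpl. replace (r*r+0*0) with (r*r) by ring. apply sqrt_square; auto. Qed.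
Lemma Cnorm_1 : Cnorm C1 = 1.
Proof. apply (Cnorm_RC 1); lra. Qed.
Lemma Cnorm_inv a : a <> C0 -> Cnorm (Cinv a) * Cnorm a = 1.
Proof.
  intro h. rewrite <- Cnorm_mul. replace (Cmul (Cinv a) a) with C1 by (field; auto). apply Cnorm_1.
Qed.

Lemma Cmul_eq0 a b : Cmul a b = C0 -> a = C0 \/ b = C0.
Proof.
  intro h. destruct (classic (a = C0)) as [|ha]; [left; auto|right].
  replace b with (Cmul (Cinv a) (Cmul a b)) by (field; auto). rewrite h. ring.
Qed.

Lemma Csqrt_ex (z : CC) : exists w, Cmul w w = z.
Proof.
  destruct z as [a b].
  set (m := sqrt (a*a+b*b)).
  assert (hm : m*m = a*a+b*b) by (apply sqrt_sqrt; nra).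
  assert (hm0 : 0 <= m) by apply sqrt_pos.
  assert (ha : Rabs a <= m).
  { unfold Rabs; destruct Rcase_abs; nra. }
  assert (h1 : 0 <= (m + a)/2) by (pose proof (Rle_abs (-a)); rewrite Rabs_Ropp in *; lra).
  assert (h2 : 0 <= (m - a)/2) by (pose proof (Rle_abs a); lra).
  set (u := sqrt ((m+a)/2)). set (v := sqrt ((m-a)/2)).
  assert (hu : u*u = (m+a)/2) by (apply sqrt_sqrt; auto).
  assert (hv : v*v = (m-a)/2) by (apply sqrt_sqrt; auto).
  assert (huv : (u*v)*(u*v) = (b*b)/4) by (replace ((u*v)*(u*v)) with ((u*u)*(v*v)) by ring; rewrite hu, hv; field_simplify; nra).
  assert (hu0 : 0 <= u) by apply sqrt_pos. assert (hv0 : 0 <= v) by apply sqrt_pos.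
  assert (huv2 : u*v = Rabs b / 2).
  { apply Rsqr_inj. nra. pose proof (Rabs_pos b); lra. unfold Rsqr. rewrite huv.
    replace (Rabs b / 2 * (Rabs b / 2)) with ((Rabs b * Rabs b)/4) by field.
    rewrite <- Rabs_mult, Rabs_pos_eq by nra. reflexivity. }
  destruct (Rle_dec 0 b).
  - exists (u, v). apply Ceq; simpl. nra. rewrite Rabs_pos_eq in huv2 by lra. lra.
  - exists (u, -v). apply Ceq; simpl. nra. rewrite Rabs_left in huv2 by lra. lra.
Qed.

Fixpoint Cpow (a : CC) (n : nat) : CC := match n with O => C1 | S k => Cmul a (Cpow a k) end.

Lemma Cpow_add a m n : Cpow a (m + n) = Cmul (Cpow a m) (Cpow a n).
Proof. induction m; simpl. ring. rewrite IHm; ring. Qed.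
Lemma Cpow_1 n : Cpow C1 n = C1.
Proof. induction n; simpl; auto. rewrite IHn; ring. Qed.

Lemma root_m1 (n : nat) : (1 <= n)%nat -> exists w, Cpow w n = Copp C1.
Proof.
  intro hn. set (t := PI / INR n). exists (cos t, sin t).
  assert (forall k, Cpow (cos t, sin t) k = (cos (INR k * t), sin (INR k * t))).
  { induction k. simpl. rewrite Rmult_0_l, cos_0, sin_0. reflexivity.
    simpl Cpow. rewrite IHk. rewrite S_INR. apply Ceq; simpl.
    replace ((INR k + 1) * t) with (t + INR k * t) by ring. rewrite cos_plus; ring.
    replace ((INR k + 1) * t) with (t + INR k * t) by ring. rewrite sin_plus; ring. }
  rewrite H. unfold t. replace (INR n * (PI / INR n)) with PI.
  rewrite cos_PI, sin_PI. apply Ceq; simpl; ring.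
  field. apply not_0_INR. lia.
Qed.


Fixpoint zipadd (a b : list CC) : list CC :=
  match a, b with x :: a', y :: b' => Cadd x y :: zipadd a' b' | _, _ => [] end.

Section Vec.
Variable H : CHilbert.
Local Notation V := (hv H).
Local Notation "0v" := (hzero H).
Local Notation add := (hadd H).
Local Notation sc := (hscal H).
Local Notation ip := (hinner H).

Lemma add0l (x : V) : add 0v x = x.
Proof. rewrite hadd_comm; apply hadd_0. Qed.

Lemma add_cancel (z x y : V) : add z x = add z y -> x = y.
Proof.
  intro h. assert (e : add (hopp H z) (add z x) = add (hopp H z) (add z y)) by (rewrite h; auto).
  rewrite !hadd_assoc in e. rewrite (hadd_comm _ (hopp H z) z), hadd_opp, !add0l in e. exact e.
Qed.

Lemma scal0 (x : V) : sc C0 x = 0v.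
Proof.
  apply (add_cancel (sc C0 x)). rewrite hadd_0, <- hscal_adds. f_equal. apply Ceq; simpl; ring.
Qed.

Lemma scalv0 a : sc a 0v = 0v.
Proof.
  apply (add_cancel (sc a 0v)). rewrite hadd_0, <- hscal_addv, hadd_0. reflexivity.
Qed.

Lemma opp_scal (x : V) : hopp H x = sc (Copp C1) x.
Proof.
  apply (add_cancel x). rewrite hadd_opp.
  transitivity (add (sc C1 x) (sc (Copp C1) x)); [| rewrite hscal_1; auto].
  rewrite <- hscal_adds. replace (Cadd C1 (Copp C1)) with C0 by (apply Ceq; simpl; ring).
  rewrite scal0; auto.
Qed.

Lemma ip_0l y : ip 0v y = C0.
Proof. rewrite <- (scal0 0v), hinner_scall. apply Ceq; simpl; ring. Qed.

Lemma ip_addr x y z : ip x (add y z) = Cadd (ip x y) (ip x z).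
Proof.
  rewrite hinner_conj, hinner_addl, Cconj_add, <- !hinner_conj. reflexivity.
Qed.

Lemma ip_scalr a x y : ip x (sc a y) = Cmul (Cconj a) (ip x y).
Proof.
  rewrite hinner_conj, hinner_scall, Cconj_mul, <- hinner_conj. reflexivity.
Qed.

Lemma ip_0r x : ip x 0v = C0.
Proof. rewrite hinner_conj, ip_0l. apply Cconj_0. Qed.

Lemma ip_eq0 x : ip x x = C0 -> x = 0v.
Proof. apply hinner_def. Qed.

Lemma ip_ext u v : (forall y, ip y u = ip y v) -> u = v.
Proof.
  intro h. set (w := add u (sc (Copp C1) v)).
  assert (ip w w = C0).
  { unfold w at 2. rewrite ip_addr, ip_scalr, h. apply Ceq; simpl; ring. }
  apply ip_eq0 in H0. unfold w in H0.
  apply (f_equal (fun t => add t v)) in H0.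
  rewrite <- hadd_assoc in H0.
  assert (e : add (sc (Copp C1) v) v = 0v) by (rewrite hadd_comm, <- opp_scal; apply hadd_opp).
  rewrite e, hadd_0, add0l in H0. exact H0.
Qed.

Lemma ip_ext_l u v : (forall y, ip u y = ip v y) -> u = v.
Proof.
  intro h. apply ip_ext. intro y. rewrite (hinner_conj H u y), (hinner_conj H v y), h. auto.
Qed.

Lemma lc_add ys : forall cs ds, length cs = length ys -> length ds = length ys ->
  add (lincomb H cs ys) (lincomb H ds ys) = lincomb H (zipadd cs ds) ys.
Proof.
  induction ys as [|y ys IH]; intros [|c cs] [|d ds]; simpl; intros h1 h2; try discriminate.
  - apply hadd_0.
  - injection h1; injection h2; intros e2 e1.
    rewrite <- (IH cs ds e1 e2), hscal_adds.
    rewrite <- !hadd_assoc. f_equal. rewrite !hadd_assoc. f_equal. apply hadd_comm.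
Qed.

Lemma lc_scal a ys : forall cs, sc a (lincomb H cs ys) = lincomb H (map (Cmul a) cs) ys.
Proof.
  induction ys as [|y ys IH]; intros [|c cs]; simpl; try apply scalv0.
  rewrite hscal_addv, hscal_assoc, IH. reflexivity.
Qed.

Lemma lc_lin (T : V -> V) ys : linear_op H T -> forall cs,
  T (lincomb H cs ys) = lincomb H cs (map T ys).
Proof.
  intros [ha hs]. assert (T0 : T 0v = 0v).
  { transitivity (T (sc C0 0v)); [rewrite scal0; auto| rewrite hs, scal0; auto]. }
  induction ys as [|y ys IH]; intros [|c cs]; simpl; auto.
  rewrite ha, hs, IH. reflexivity.
Qed.

Lemma lin_zero (T : V -> V) : linear_op H T -> T 0v = 0v.
Proof. intros [ha hs]. transitivity (T (sc C0 0v)); [rewrite scal0; auto| rewrite hs, scal0; auto]. Qed.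

Lemma lin_opp (T : V -> V) x : linear_op H T -> T (hopp H x) = hopp H (T x).
Proof. intros [ha hs]. rewrite !opp_scal, hs. reflexivity. Qed.

Definition Nv (x : V) : R := fst (ip x x).

Lemma ip_self_im x : snd (ip x x) = 0.
Proof. pose proof (hinner_conj H x x) as e. destruct (ip x x) as [a b]. simpl in *.
  injection e; lra. Qed.

Lemma ip_self x : ip x x = RC (Nv x).
Proof. unfold Nv, RC. apply Ceq; simpl; auto. apply ip_self_im. Qed.

Lemma Nv_ge0 x : 0 <= Nv x.
Proof. apply hinner_pos. Qed.

Lemma hnorm_Nv x : hnorm H x = sqrt (Nv x).
Proof. reflexivity. Qed.

Lemma Nv_eq0 x : Nv x = 0 -> x = 0v.
Proof. intro h. apply ip_eq0. rewrite ip_self, h. reflexivity. Qed.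

Lemma Nv_scal a x : Nv (sc a x) = (fst a * fst a + snd a * snd a) * Nv x.
Proof.
  unfold Nv. rewrite hinner_scall, ip_scalr, ip_self. destruct a; unfold RC; simpl; ring.
Qed.

Lemma Nv_add x y : Nv (add x y) = Nv x + Nv y + 2 * fst (ip x y).
Proof.
  unfold Nv. rewrite hinner_addl, !ip_addr. rewrite (hinner_conj H x y).
  destruct (ip y x) as [a b]; simpl. ring.
Qed.

Lemma CS x y : fst (ip x y) * fst (ip x y) + snd (ip x y) * snd (ip x y) <= Nv x * Nv y.
Proof.
  destruct (Req_dec (Nv y) 0) as [h0|h0].
  - apply Nv_eq0 in h0. subst. rewrite ip_0r. simpl. unfold Nv at 2. rewrite ip_0l. simpl. nra.
  - pose proof (Nv_ge0 y) as hy.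
    set (t := Cmul (ip x y) (RC (/ Nv y))).
    pose proof (Nv_ge0 (add x (sc (Copp t) y))) as hp.
    rewrite Nv_add, Nv_scal in hp. rewrite ip_scalr in hp.
    unfold t, RC in hp. destruct (ip x y) as [a b]. simpl in hp |- *.
    assert (0 < Nv y) by lra.
    set (n := Nv y) in *. set (iv := / n) in *.
    assert (iv * n = 1) by (unfold iv; field; lra).
    assert (e : 0 <= Nv x - (a*a+b*b)*iv).
    { replace (Nv x - (a*a+b*b)*iv) with
        (Nv x + ((- (a * iv - b * 0)) * (- (a * iv - b * 0)) + (- (a * 0 + b * iv)) * (- (a * 0 + b * iv))) * n +
         2 * (- (a * iv - b * 0) * a - - - (a * 0 + b * iv) * b)); [exact hp|].
      replace ((- (a * iv - b * 0)) * (- (a * iv - b * 0)) + (- (a * 0 + b * iv)) * (- (a * 0 + b * iv))) with ((a*a+b*b)*iv*iv) by ring.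
      replace ((a*a+b*b)*iv*iv*n) with ((a*a+b*b)*iv*(iv*n)) by ring. rewrite H1. ring. }
    assert (E : (Nv x - (a*a+b*b)*iv) * n = Nv x * n - (a*a+b*b)).
    { replace ((Nv x - (a*a+b*b)*iv) * n) with (Nv x * n - (a*a+b*b)*(iv*n)) by ring. rewrite H1; ring. }
    assert (0 <= (Nv x - (a*a+b*b)*iv) * n) by (apply Rmult_le_pos; lra). lra.
Qed.

Lemma Cnorm_ip x y : Cnorm (ip x y) <= hnorm H x * hnorm H y.
Proof.
  unfold Cnorm. rewrite !hnorm_Nv, <- sqrt_mult by apply Nv_ge0.
  apply sqrt_le_1_alt. apply CS.
Qed.

Lemma hnorm_ge0 x : 0 <= hnorm H x.
Proof. apply sqrt_pos. Qed.

Lemma hnorm_sq x : hnorm H x * hnorm H x = Nv x.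
Proof. apply sqrt_sqrt, Nv_ge0. Qed.

Lemma hnorm_scal a x : hnorm H (sc a x) = Cnorm a * hnorm H x.
Proof.
  rewrite !hnorm_Nv, Nv_scal. unfold Cnorm. rewrite sqrt_mult; auto. nra. apply Nv_ge0.
Qed.

Lemma hnorm_tri x y : hnorm H (add x y) <= hnorm H x + hnorm H y.
Proof.
  pose proof (hnorm_sq (add x y)) as e. rewrite Nv_add in e.
  pose proof (hnorm_sq x); pose proof (hnorm_sq y).
  pose proof (Cnorm_ip x y) as c. pose proof (Cnorm_sq (ip x y)).
  assert (fst (ip x y) <= Cnorm (ip x y)).
  { pose proof (Cnorm_ge0 (ip x y)). destruct (ip x y) as [a b]; simpl in *. nra. }
  pose proof (hnorm_ge0 x); pose proof (hnorm_ge0 y); pose proof (hnorm_ge0 (add x y)).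
  nra.
Qed.

Lemma hnorm_zero_iff x : hnorm H x = 0 -> x = 0v.
Proof. intro h. apply Nv_eq0. rewrite <- hnorm_sq, h. ring. Qed.

Lemma hnorm_0 : hnorm H 0v = 0.
Proof. rewrite hnorm_Nv. unfold Nv. rewrite ip_0l. simpl. apply sqrt_0. Qed.

End Vec.


Lemma le_eps (a b : R) : (forall e, 0 < e -> a <= b + e) -> a <= b.
Proof. intro h. destruct (Rle_dec a b); auto. specialize (h ((a-b)/2)). lra. Qed.

Lemma arch (e : R) : 0 < e -> exists N : nat, forall n, (N <= n)%nat -> / INR (S n) < e.
Proof.
  intro he. destruct (archimed_cor1 e he) as [N [h1 h2]]. exists N. intros n hn.
  apply Rle_lt_trans with (/ INR N); auto. apply Rinv_le_contravar. apply lt_0_INR; lia.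
  apply le_INR; lia.
Qed.

Lemma sqrt_le_sq (a e : R) : 0 <= a -> 0 <= e -> a < e * e -> sqrt a < e.
Proof.
  intros ha he h. rewrite <- (sqrt_square e) by auto. apply sqrt_lt_1_alt. lra.
Qed.

Section Riesz.
Variable H : CHilbert.
Local Notation V := (hv H).
Local Notation "0v" := (hzero H).
Local Notation add := (hadd H).
Local Notation sc := (hscal H).
Local Notation ip := (hinner H).
Local Notation Nv := (Nv H).
Local Notation hn := (hnorm H).

Definition dv (a b : V) := add a (hopp H b).

Lemma Nv_opp x : Nv (hopp H x) = Nv x.
Proof. rewrite opp_scal, Nv_scal. simpl. ring. Qed.

Lemma ip_oppr x y : ip x (hopp H y) = Copp (ip x y).
Proof. rewrite opp_scal, ip_scalr. apply Ceq; simpl; ring. Qed.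
Lemma ip_oppl x y : ip (hopp H x) y = Copp (ip x y).
Proof. rewrite opp_scal, hinner_scall. apply Ceq; simpl; ring. Qed.

Lemma Nv_dv_sym a b : Nv (dv a b) = Nv (dv b a).
Proof.
  unfold dv. rewrite !Nv_add, !Nv_opp, !ip_oppr.
  rewrite (hinner_conj H a b). destruct (ip b a); simpl. ring.
Qed.

Lemma paral a b : Nv (add a b) + Nv (dv a b) = 2 * Nv a + 2 * Nv b.
Proof. unfold dv. rewrite !Nv_add, Nv_opp, ip_oppr. simpl. ring. Qed.

Lemma fst_le_norm x y : fst (ip x y) <= hn x * hn y.
Proof.
  pose proof (Cnorm_ip H x y). pose proof (Cnorm_sq (ip x y)). pose proof (Cnorm_ge0 (ip x y)).
  destruct (ip x y) as [a b]; simpl in *. nra.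
Qed.

Lemma dv_add_back a b : add b (dv a b) = a.
Proof. unfold dv. rewrite hadd_comm, <- hadd_assoc, (hadd_comm _ (hopp H b)), hadd_opp, hadd_0. auto. Qed.

Lemma quad0 (a b : R) : 0 <= b -> (forall t, 0 <= 2 * t * a + t * t * b) -> a = 0.
Proof.
  intros hb h. specialize (h (- a / (b + 1))).
  assert (e : 2 * (- a / (b + 1)) * a + (- a / (b + 1)) * (- a / (b + 1)) * b
             = - (a*a) * (b + 2) / ((b+1)*(b+1))) by (field; lra).
  rewrite e in h.
  assert (0 < (b+1)*(b+1)) by nra.
  assert (0 <= - (a*a) * (b+2)) .
  { apply (Rmult_le_reg_r (/ ((b+1)*(b+1)))). apply Rinv_0_lt_compat; auto.
    rewrite Rmult_0_l. exact h. }
  nra.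
Qed.

Theorem riesz (phi : V -> CC) :
  (forall x y, phi (add x y) = Cadd (phi x) (phi y)) ->
  (forall a x, phi (sc a x) = Cmul a (phi x)) ->
  (exists K, forall x, Cnorm (phi x) <= K * hn x) ->
  exists w, forall x, phi x = ip x w.
Proof.
  intros hadd hsc [K0 hK0].
  set (K := Rmax K0 0).
  assert (hK : forall x, Cnorm (phi x) <= K * hn x).
  { intro x. eapply Rle_trans. apply hK0. apply Rmult_le_compat_r. apply hnorm_ge0. apply Rmax_l. }
  assert (K0p : 0 <= K) by apply Rmax_r.
  assert (phi0 : phi 0v = C0).
  { transitivity (phi (sc C0 0v)). rewrite scal0; auto. rewrite hsc. apply Ceq; simpl; ring. }
  destruct (classic (forall x, phi x = C0)) as [hz|hnz].
  { exists 0v. intro x. rewrite hz, ip_0r. auto. }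
  apply not_all_ex_not in hnz. destruct hnz as [x0 hx0].
  set (x1 := sc (Cinv (phi x0)) x0).
  assert (hx1 : phi x1 = C1) by (unfold x1; rewrite hsc; field; auto).
  set (U := fun t => forall x, phi x = C1 -> t <= Nv x).
  assert (hb : bound U) by (exists (Nv x1); intros t ht; apply ht; auto).
  assert (hne : exists t, U t) by (exists 0; intros x _; apply Nv_ge0).
  destruct (completeness U hb hne) as [m [hm1 hm2]].
  assert (hlow : forall x, phi x = C1 -> m <= Nv x).
  { intros x hx. apply hm2. intros t ht. apply ht; auto. }
  assert (m0 : 0 <= m) by (apply hm1; intros x _; apply Nv_ge0).
  assert (happ : forall e, 0 < e -> exists x, phi x = C1 /\ Nv x < m + e).
  { intros e he. apply NNPP; intro hn0.
    assert (U (m + e)).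
    { intros x hx. apply Rnot_lt_le. intro hl. apply hn0. exists x; split; auto. }
    apply hm1 in H0. lra. }
  assert (hseq : forall k : nat, {x | phi x = C1 /\ Nv x < m + / INR (S k)}).
  { intro k. apply constructive_indefinite_description. apply happ.
    apply Rinv_0_lt_compat, lt_0_INR; lia. }
  set (u := fun k => proj1_sig (hseq k)).
  assert (hu1 : forall k, phi (u k) = C1) by (intro k; unfold u; destruct (hseq k) as [? [? ?]]; auto).
  assert (hu2 : forall k, Nv (u k) < m + / INR (S k)) by (intro k; unfold u; destruct (hseq k) as [? [? ?]]; auto).
  assert (hpar : forall a b, phi a = C1 -> phi b = C1 -> Nv (dv a b) <= 2 * Nv a + 2 * Nv b - 4 * m).
  { intros a b ha hb'. pose proof (paral a b).
    assert (m <= Nv (sc (RC (/2)) (add a b))).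
    { apply hlow. rewrite hsc, hadd, ha, hb'. apply Ceq; unfold RC; simpl; field. }
    rewrite Nv_scal in H1. simpl in H1. lra. }
  assert (hcauchy : forall eps, 0 < eps -> exists N, forall i j, (N <= i)%nat -> (N <= j)%nat ->
     sqrt (fst (ip (add (u i) (hopp H (u j))) (add (u i) (hopp H (u j))))) < eps).
  { intros eps he. destruct (arch (eps * eps / 4)) as [N hN]. nra.
    exists N. intros i j hi hj. apply sqrt_le_sq; try lra. apply hinner_pos.
    fold (Nv (dv (u i) (u j))).
    pose proof (hpar _ _ (hu1 i) (hu1 j)). pose proof (hu2 i). pose proof (hu2 j).
    pose proof (hN i hi). pose proof (hN j hj). unfold Nv, dv in *. lra. }
  destruct (hcomplete H u hcauchy) as [l hl].
  assert (hl' : forall e, 0 < e -> exists N, forall n, (N <= n)%nat -> hn (dv (u n) l) < e) by exact hl.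
  assert (hphil : phi l = C1).
  { assert (forall n, Cnorm (Csub (phi l) C1) <= K * hn (dv (u n) l)).
    { intro n. rewrite <- (hu1 n).
      replace (Csub (phi l) (phi (u n))) with (Copp (phi (dv (u n) l))).
      rewrite Cnorm_opp. apply hK.
      unfold dv. rewrite hadd, opp_scal, hsc. unfold Csub. apply Ceq; simpl; ring. }
    assert (E : Cnorm (Csub (phi l) C1) = 0).
    { apply Rle_antisym; [| apply Cnorm_ge0]. apply le_eps. intros e he.
      destruct (hl' (e / (K + 1))) as [N hN]. apply Rdiv_lt_0_compat; lra.
      specialize (hN N (le_n N)). specialize (H0 N).
      assert (K * hn (dv (u N) l) <= e).
      { apply Rle_trans with (K * (e / (K+1))). apply Rmult_le_compat_l; lra.
        apply Rle_trans with ((K+1) * (e/(K+1))). apply Rmult_le_compat_r. apply Rlt_le, Rdiv_lt_0_compat; lra. lra.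
        right; field; lra. }
      lra. }
    apply Cnorm_eq0 in E.
    destruct (phi l) as [p q]. unfold Csub, Cadd, Copp, C1, C0 in E. simpl in E.
    injection E; intros. apply Ceq; simpl; lra. }
  assert (hNl : Nv l <= m).
  { apply le_eps. intros dl hdl.
    set (c := 2 * (m + 2) + 1).
    set (e := Rmin 1 (dl / 2 / c)).
    assert (hc : 1 <= c) by (unfold c; lra).
    assert (he0 : 0 < e) by (unfold e; apply Rmin_pos; [lra| apply Rdiv_lt_0_compat; lra]).
    assert (he1 : e <= 1) by apply Rmin_l.
    assert (he2 : e * c <= dl / 2).
    { unfold e. apply Rle_trans with (dl / 2 / c * c). apply Rmult_le_compat_r; [lra| apply Rmin_r].
      right; field; lra. }
    destruct (hl' e he0) as [N1 hN1]. destruct (arch (Rmin 1 (dl / 2))) as [N2 hN2].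
    apply Rmin_pos; lra.
    set (n := Nat.max N1 N2). specialize (hN1 n (Nat.le_max_l _ _)). specialize (hN2 n (Nat.le_max_r _ _)).
    pose proof (hu2 n) as hun. pose proof (Rmin_l 1 (dl/2)); pose proof (Rmin_r 1 (dl/2)).
    rewrite <- (dv_add_back l (u n)). rewrite Nv_add.
    pose proof (fst_le_norm (u n) (dv l (u n))).
    assert (hd : hn (dv l (u n)) < e) by (rewrite hnorm_Nv, Nv_dv_sym, <- hnorm_Nv; exact hN1).
    assert (hs : hn (u n) <= m + 2).
    { rewrite hnorm_Nv. pose proof (Nv_ge0 H (u n)).
      destruct (Rle_dec (Nv (u n)) 1).
      - assert (sqrt (Nv (u n)) <= 1). { rewrite <- sqrt_1. apply sqrt_le_1_alt; auto. } lra.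
      - assert (sqrt (Nv (u n)) <= Nv (u n)). { left; apply sqrt_less; lra. } lra. }
    pose proof (hnorm_sq H (dv l (u n))). pose proof (hnorm_ge0 H (dv l (u n))). pose proof (hnorm_ge0 H (u n)).
    assert (Nv (dv l (u n)) <= e * e) by nra.
    assert (hn (u n) * hn (dv l (u n)) <= (m + 2) * e) by nra.
    assert (e * e <= e) by nra.
    unfold c in he2. nra. }
  assert (hNl2 : Nv l = m) by (apply Rle_antisym; auto).
  assert (horth : forall y, phi y = C0 -> ip y l = C0).
  { intros y hy.
    assert (hq : forall y, phi y = C0 -> fst (ip l y) = 0).
    { intros z hz. apply (quad0 _ (Nv z)). apply Nv_ge0. intro t.
      assert (m <= Nv (add l (sc (RC t) z))).
      { apply hlow. rewrite hadd, hsc, hz, hphil. apply Ceq; simpl; ring. }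
      rewrite Nv_add, Nv_scal, ip_scalr in H0. unfold RC in H0; simpl in H0.
      destruct (ip l z); simpl in *. nra. }
    pose proof (hq y hy) as q1.
    assert (q2 : fst (ip l (sc (0,1) y)) = 0).
    { apply hq. rewrite hsc, hy. apply Ceq; simpl; ring. }
    rewrite ip_scalr in q2. rewrite hinner_conj. destruct (ip l y) as [a b]; simpl in *.
    apply Ceq; simpl; lra. }
  assert (Npos : 0 < Nv l).
  { destruct (Nv_ge0 H l); auto. exfalso. symmetry in H0. apply Nv_eq0 in H0. rewrite H0, phi0 in hphil.
    apply C1_neq_C0; auto. }
  exists (sc (RC (/ Nv l)) l). intro x.
  set (y := add x (sc (Copp (phi x)) l)).
  assert (hy : phi y = C0) by (unfold y; rewrite hadd, hsc, hphil; apply Ceq; simpl; ring).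
  apply horth in hy. unfold y in hy. rewrite hinner_addl, hinner_scall, ip_self in hy.
  rewrite ip_scalr. unfold RC in *. destruct (ip x l) as [a b]. destruct (phi x) as [p q].
  simpl in hy. injection hy; intros h2 h1. apply Ceq; simpl.
  - apply (Rmult_eq_reg_r (Nv l)); [|lra]. field_simplify; [|lra]. nra.
  - apply (Rmult_eq_reg_r (Nv l)); [|lra]. field_simplify; [|lra]. nra.
Qed.

Lemma adjoint_spec (A : V -> V) : bounded_op H A -> is_adjoint H A (adjoint H A).
Proof.
  intros [[ha hs] [M hM]].
  assert (ex : forall z, exists w, forall x, ip (A x) z = ip x w).
  { intro z. apply (riesz (fun x => ip (A x) z)).
    - intros x y. rewrite ha, hinner_addl; auto.
    - intros a x. rewrite hs, hinner_scall; auto.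
    - exists (M * hn z). intro x. eapply Rle_trans. apply Cnorm_ip.
      replace (M * hn z * hn x) with ((M * hn x) * hn z) by ring.
      apply Rmult_le_compat_r. apply hnorm_ge0. apply hM. }
  unfold adjoint. apply epsilon_spec.
  exists (fun z => epsilon (inhabits 0v) (fun w => forall x, ip (A x) z = ip x w)).
  intros x z. pose proof (epsilon_spec (inhabits 0v) (fun w => forall x, ip (A x) z = ip x w) (ex z)).
  apply H0.
Qed.

Lemma adjoint_linear (A S : V -> V) : is_adjoint H A S -> linear_op H S.
Proof.
  intro h. split.
  - intros x y. apply ip_ext. intro z. rewrite <- h, !ip_addr, <- !h. reflexivity.
  - intros a x. apply ip_ext. intro z. rewrite <- h, !ip_scalr, <- h. reflexivity.
Qed.

End Riesz.


Fixpoint dotC (a b : list CC) : CC :=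
  match a, b with x :: a', y :: b' => Cadd (Cmul x y) (dotC a' b') | _, _ => C0 end.
Fixpoint nsum (a : list CC) (b : list R) : R :=
  match a, b with x :: a', y :: b' => Cnorm x * y + nsum a' b' | _, _ => 0 end.

Section Spec.
Variable H : CHilbert.
Local Notation V := (hv H).
Local Notation "0v" := (hzero H).
Local Notation add := (hadd H).
Local Notation sc := (hscal H).
Local Notation ip := (hinner H).
Local Notation hn := (hnorm H).
Local Notation lc := (lincomb H).

Definition lin_fun (phi : V -> CC) :=
  (forall x y, phi (add x y) = Cadd (phi x) (phi y)) /\ (forall a x, phi (sc a x) = Cmul a (phi x)).

Lemma lin_fun_0 phi : lin_fun phi -> phi 0v = C0.
Proof. intros [ha hs]. transitivity (phi (sc C0 0v)). rewrite scal0; auto. rewrite hs. apply Ceq; simpl; ring. Qed.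

Lemma lc_fun phi ys : lin_fun phi -> forall cs, phi (lc cs ys) = dotC cs (map phi ys).
Proof.
  intro hp. pose proof (lin_fun_0 phi hp) as h0. destruct hp as [ha hs].
  induction ys as [|y ys IH]; intros [|c cs]; simpl; auto.
  rewrite ha, hs, IH. reflexivity.
Qed.

Lemma lc_opp ys cs : hopp H (lc cs ys) = lc (map Copp cs) ys.
Proof.
  rewrite opp_scal, lc_scal. f_equal. apply map_ext. intro a. apply Ceq; simpl; ring.
Qed.

Lemma lc_norm ys : forall cs, hn (lc cs ys) <= nsum cs (map hn ys).
Proof.
  induction ys as [|y ys IH]; intros [|c cs]; simpl; try (rewrite hnorm_0; lra).
  eapply Rle_trans. apply hnorm_tri. rewrite hnorm_scal. specialize (IH cs). lra.
Qed.

Lemma lin_add (f g : V -> V) : linear_op H f -> linear_op H g -> linear_op H (fun x => add (f x) (g x)).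
Proof.
  intros [fa fs] [ga gs]. split.
  - intros x y. rewrite fa, ga. rewrite <- !hadd_assoc. f_equal. rewrite !hadd_assoc. f_equal. apply hadd_comm.
  - intros a x. rewrite fs, gs, hscal_addv. auto.
Qed.

Lemma lin_scal c (f : V -> V) : linear_op H f -> linear_op H (fun x => sc c (f x)).
Proof.
  intros [fa fs]. split.
  - intros x y. rewrite fa, hscal_addv. auto.
  - intros a x. rewrite fs, !hscal_assoc. f_equal. apply Ceq; simpl; ring.
Qed.

Lemma lin_id : linear_op H (fun x => x).
Proof. split; auto. Qed.

Lemma lin_rank1 phi Q : lin_fun phi -> linear_op H (fun x => sc (phi x) Q).
Proof.
  intros [ha hs]. split.
  - intros x y. rewrite ha, hscal_adds. auto.
  - intros a x. rewrite hs, hscal_assoc. auto.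
Qed.

Lemma lin_comp (f g : V -> V) : linear_op H f -> linear_op H g -> linear_op H (fun x => f (g x)).
Proof.
  intros [fa fs] [ga gs]. split.
  - intros x y. rewrite ga, fa. auto.
  - intros a x. rewrite gs, fs. auto.
Qed.

Lemma lc2_x x Q : x = lc [C1; C0] [x; Q].
Proof. simpl. rewrite hscal_1, scal0, add0l, hadd_0; auto. Qed.
Lemma lc2_sx c x Q : sc c x = lc [c; C0] [x; Q].
Proof. simpl. rewrite scal0, add0l, hadd_0; auto. Qed.
Lemma lc2_sQ c x Q : sc c Q = lc [C0; c] [x; Q].
Proof. simpl. rewrite scal0, add0l, hadd_0; auto. Qed.
Lemma lc2_split a b y x Q : lc [a; b] [y; Q] = add (sc a y) (lc [C0; b] [x; Q]).
Proof. simpl. rewrite scal0, add0l. auto. Qed.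
Lemma lc2_add cs ds x Q : length cs = 2%nat -> length ds = 2%nat ->
  add (lc cs [x;Q]) (lc ds [x;Q]) = lc (zipadd cs ds) [x;Q].
Proof. intros; apply lc_add; auto. Qed.

Lemma lin_zero_fun : linear_op H (fun _ => 0v).
Proof. split; intros. rewrite hadd_0; auto. rewrite scalv0; auto. Qed.

Lemma lin_ip P : lin_fun (fun x => ip x P).
Proof. split. intros; apply hinner_addl. intros; apply hinner_scall. Qed.

Lemma spec_eig (T : V -> V) z v : v <> 0v -> T v = sc z v -> spectrum H T z.
Proof.
  intros hv hT [S [[hl _] [h1 h2]]]. specialize (h1 v). rewrite hT, hadd_opp in h1.
  rewrite (lin_zero H S hl) in h1. auto.
Qed.

Lemma radius_intro (T : V -> V) rho z0 :
  (forall w, spectrum H T w -> Cnorm w <= rho) -> spectrum H T z0 -> Cnorm z0 = rho ->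
  spectral_radius H T rho.
Proof.
  intros h1 h2 h3. split.
  - intros t [w [hw ht]]. subst. auto.
  - intros b hb. rewrite <- h3. apply hb. exists z0; auto.
Qed.

Lemma dim_nonzero_kernel phi : dim_ge2 H -> lin_fun phi -> exists v, v <> 0v /\ phi v = C0.
Proof.
  intros [x [y hxy]] hp. destruct hp as [ha hs].
  destruct (classic (phi x = C0 /\ phi y = C0)) as [[h1 h2]|hn0].
  - exists x. split; auto. intro e. destruct (hxy C1 C0) as [h _].
    rewrite e, scal0, scalv0, hadd_0. auto. apply C1_neq_C0; auto.
  - exists (add (sc (phi y) x) (sc (Copp (phi x)) y)). split.
    + intro e. apply hxy in e. destruct e as [e1 e2]. apply hn0. split; auto.
      replace (phi x) with (Copp (Copp (phi x))) by ring. rewrite e2. ring.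
    + rewrite ha, !hs. ring.
Qed.

Lemma spec1 (T : V -> V) (phi : V -> CC) (Q : V) :
  dim_ge2 H -> lin_fun phi -> (forall x, T x = sc (phi x) Q) ->
  (exists M, forall x, hn (T x) <= M * hn x) -> periph_singleton H T.
Proof.
  intros hdim hp hT [M hM].
  set (mu := phi Q).
  assert (s0 : spectrum H T C0).
  { destruct (dim_nonzero_kernel phi hdim hp) as [v [hv hv0]]. apply (spec_eig T C0 v hv).
    rewrite hT, hv0, !scal0. auto. }
  assert (smu : spectrum H T mu).
  { destruct (classic (Q = 0v)) as [hq|hq].
    - unfold mu. rewrite hq, (lin_fun_0 phi hp). auto.
    - apply (spec_eig T mu Q hq). rewrite hT. auto. }
  assert (sout : forall w, w <> C0 -> w <> mu -> ~ spectrum H T w).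
  { intros w hw0 hwm hs. apply hs. clear hs.
    assert (hd : Csub mu w <> C0). { intro e. apply hwm. replace mu with (Cadd w (Csub mu w)) by ring. rewrite e. ring. }
    set (beta := Cinv (Cmul w (Csub mu w))).
    set (a := Copp (Cinv w)).
    exists (fun x => lc [a; Cmul beta (phi x)] [x; Q]).
    assert (hphS : forall x, phi (lc [a; Cmul beta (phi x)] [x; Q]) = Cadd (Cmul a (phi x)) (Cmul (Cmul beta (phi x)) mu)).
    { intro x. rewrite (lc_fun phi _ hp). simpl. fold mu. ring. }
    split; [split|split].
    - simpl. apply lin_add. apply lin_scal, lin_id. apply lin_add.
      apply (lin_rank1 (fun x => Cmul beta (phi x))). destruct hp as [ha hs]. split.
      intros; rewrite ha; ring. intros; rewrite hs; ring.
      apply lin_zero_fun.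
    - exists (Cnorm a + Cnorm beta * M). intro x. eapply Rle_trans. apply lc_norm. simpl.
      rewrite Cnorm_mul. replace (Cnorm beta * Cnorm (phi x) * hn Q) with (Cnorm beta * hn (T x)) by (rewrite hT, hnorm_scal; ring).
      pose proof (hM x). pose proof (Cnorm_ge0 beta). nra.
    - intro x.
      assert (ey : add (T x) (hopp H (sc w x)) = lc [Copp w; phi x] [x; Q]).
      { rewrite hT, opp_scal, hscal_assoc, (lc2_sQ _ x Q), (lc2_sx _ x Q), lc2_add by auto.
        simpl zipadd. f_equal. f_equal; [ring| f_equal; ring]. }
      rewrite ey, (lc2_split _ _ _ x Q), lc_scal, lc2_add by auto.
      rewrite (lc_fun phi _ hp). simpl map. simpl dotC. simpl zipadd. fold mu.
      transitivity (lc [C1; C0] [x; Q]); [| symmetry; apply lc2_x]. f_equal. f_equal.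
      + unfold a. field. auto.
      + f_equal. unfold a, beta. field. auto.
    - intro x. rewrite hT, hphS. rewrite opp_scal, hscal_assoc, lc_scal.
      rewrite (lc2_sQ _ x Q), lc2_add by auto. simpl map. simpl zipadd.
      transitivity (lc [C1; C0] [x; Q]); [| symmetry; apply lc2_x]. f_equal. f_equal.
      + unfold a. field. auto.
      + f_equal. unfold a, beta. field. auto. }
  assert (hrad : spectral_radius H T (Cnorm mu)).
  { apply (radius_intro T _ mu); auto. intros w hw.
    destruct (classic (w = C0)) as [e|e]. rewrite e, Cnorm_0. apply Cnorm_ge0.
    destruct (classic (w = mu)) as [e'|e']. rewrite e'; lra. exfalso; apply (sout w e e' hw). }
  exists mu. intro w. split.
  - intros [hs hr]. pose proof (is_lub_u _ _ _ hr hrad) as en.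
    destruct (classic (w = mu)) as [|e']; auto.
    destruct (classic (w = C0)) as [e|e]; [| exfalso; apply (sout w e e' hs)].
    rewrite e, Cnorm_0 in en. symmetry in en. apply Cnorm_eq0 in en. congruence.
  - intro e. subst w. split; auto.
Qed.

End Spec.


Section Spec2.
Variable H : CHilbert.
Local Notation V := (hv H).
Local Notation "0v" := (hzero H).
Local Notation add := (hadd H).
Local Notation sc := (hscal H).
Local Notation ip := (hinner H).
Local Notation hn := (hnorm H).
Local Notation lc := (lincomb H).

Lemma lc3_x x Q1 Q2 : x = lc [C1; C0; C0] [x; Q1; Q2].
Proof. simpl. rewrite hscal_1, !scal0, !add0l, hadd_0; auto. Qed.
Lemma lc3_T p q x Q1 Q2 : add (sc p Q1) (sc q Q2) = lc [C0; p; q] [x; Q1; Q2].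
Proof. simpl. rewrite scal0, add0l, hadd_0; auto. Qed.
Lemma lc3_sx c x Q1 Q2 : sc c x = lc [c; C0; C0] [x; Q1; Q2].
Proof. simpl. rewrite !scal0, !add0l, hadd_0; auto. Qed.
Lemma lc3_split a b c y x Q1 Q2 : lc [a; b; c] [y; Q1; Q2] = add (sc a y) (lc [C0; b; c] [x; Q1; Q2]).
Proof. simpl. rewrite scal0, add0l. auto. Qed.
Lemma lc3_add cs ds x Q1 Q2 : length cs = 3%nat -> length ds = 3%nat ->
  add (lc cs [x;Q1;Q2]) (lc ds [x;Q1;Q2]) = lc (zipadd cs ds) [x;Q1;Q2].
Proof. intros; apply lc_add; auto. Qed.

Lemma lin_fun_comb c1 c2 phi1 phi2 : lin_fun H phi1 -> lin_fun H phi2 ->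
  lin_fun H (fun x => Cadd (Cmul c1 (phi1 x)) (Cmul c2 (phi2 x))).
Proof.
  intros [a1 s1] [a2 s2]. split; intros. rewrite a1, a2; ring. rewrite s1, s2; ring.
Qed.

Lemma Cnorm_comb c1 c2 p1 p2 K h : Cnorm p1 <= K * h -> Cnorm p2 <= K * h ->
  Cnorm (Cadd (Cmul c1 p1) (Cmul c2 p2)) <= (Cnorm c1 * K + Cnorm c2 * K) * h.
Proof.
  intros h1 h2. eapply Rle_trans. apply Cnorm_triangle. rewrite !Cnorm_mul.
  pose proof (Cnorm_ge0 c1); pose proof (Cnorm_ge0 c2). nra.
Qed.

Lemma spec2 (T : V -> V) (phi1 phi2 : V -> CC) (Q1 Q2 : V) :
  lin_fun H phi1 -> lin_fun H phi2 ->
  (exists K, forall x, Cnorm (phi1 x) <= K * hn x /\ Cnorm (phi2 x) <= K * hn x) ->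
  (forall x, T x = add (sc (phi1 x) Q1) (sc (phi2 x) Q2)) ->
  Cadd (phi1 Q1) (phi2 Q2) = C0 ->
  Csub (Cmul (phi1 Q1) (phi2 Q2)) (Cmul (phi1 Q2) (phi2 Q1)) <> C0 ->
  ~ periph_singleton H T.
Proof.
  intros hp1 hp2 [K hK] hT htr hdet.
  set (k11 := phi1 Q1) in *. set (k12 := phi1 Q2) in *. set (k21 := phi2 Q1) in *. set (k22 := phi2 Q2) in *.
  set (dl := Csub (Cmul k11 k22) (Cmul k12 k21)) in *.
  destruct (Csqrt_ex (Copp dl)) as [lam hlam].
  assert (hl0 : lam <> C0).
  { intro e. rewrite e in hlam. apply hdet. replace dl with (Copp (Copp dl)) by ring. rewrite <- hlam. ring. }
  assert (hphi : forall (phi : V -> CC), lin_fun H phi -> forall c1 c2,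
     phi (lc [c1; c2] [Q1; Q2]) = Cadd (Cmul c1 (phi Q1)) (Cmul c2 (phi Q2))).
  { intros phi hp c1 c2. rewrite (lc_fun H phi _ hp). simpl. ring. }
  assert (heig : forall mu, Cmul mu mu = Copp dl -> spectrum H T mu).
  { intros mu hmu.
    assert (hm0 : mu <> C0). { intro e. apply hl0. rewrite e in hmu.
      assert (Cmul lam lam = C0) by (rewrite hlam, <- hmu; ring). destruct (Cmul_eq0 _ _ H0); auto. }
    assert (hc : exists c1 c2, (c1 <> C0 \/ c2 <> C0) /\
        Cadd (Cmul k11 c1) (Cmul k12 c2) = Cmul mu c1 /\ Cadd (Cmul k21 c1) (Cmul k22 c2) = Cmul mu c2).
    { assert (hk22 : k22 = Copp k11) by (replace k22 with (Csub (Cadd k11 k22) k11) by ring; rewrite htr; ring).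
      assert (hchar : Cadd (Cmul k21 k12) (Cmul k22 (Csub mu k11)) = Cmul mu (Csub mu k11)).
      { assert (hm2 : Cmul mu mu = Cadd (Cmul k11 k11) (Cmul k12 k21)).
        { rewrite hmu. unfold dl. rewrite hk22. ring. }
        rewrite hk22. transitivity (Csub (Cadd (Cmul k11 k11) (Cmul k12 k21)) (Cmul mu k11)). ring.
        rewrite <- hm2. ring. }
      destruct (classic (k12 = C0 /\ Csub mu k11 = C0)) as [[e1 e2]|hne].
      - exists (Csub mu k22), k21. split.
        + left. rewrite hk22. intro e. apply hm0.
          assert (emk : mu = k11) by (replace mu with (Cadd (Csub mu k11) k11) by ring; rewrite e2; ring).
          assert (Cmul (RC 2) mu = C0) by (rewrite <- e, emk; apply Ceq; simpl; ring).
          destruct (Cmul_eq0 _ _ H0) as [h|h]; auto. unfold RC, C0 in h. injection h. lra.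
        + rewrite e1. split. replace k11 with mu at 1 by (replace mu with (Cadd (Csub mu k11) k11) by ring; rewrite e2; ring). ring.
          ring.
      - exists k12, (Csub mu k11). split.
        + apply not_and_or in hne. destruct hne; auto.
        + split. ring. exact hchar. }
    destruct hc as [c1 [c2 [hnz [e1 e2]]]].
    set (v := lc [c1; c2] [Q1; Q2]).
    assert (hv1 : phi1 v = Cmul mu c1) by (unfold v; rewrite (hphi phi1 hp1); fold k11 k12; rewrite <- e1; ring).
    assert (hv2 : phi2 v = Cmul mu c2) by (unfold v; rewrite (hphi phi2 hp2); fold k21 k22; rewrite <- e2; ring).
    apply (spec_eig H T mu v).
    - intro e. destruct hnz as [h|h]; apply h.
      + destruct (Cmul_eq0 mu c1); auto. rewrite <- hv1, e. apply lin_fun_0; auto. contradiction.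
      + destruct (Cmul_eq0 mu c2); auto. rewrite <- hv2, e. apply lin_fun_0; auto. contradiction.
    - rewrite hT, hv1, hv2. unfold v. simpl. rewrite hadd_0, hscal_addv, !hscal_assoc. auto. }
  assert (sout : forall w, w <> C0 -> w <> lam -> w <> Copp lam -> ~ spectrum H T w).
  { intros w hw0 hw1 hw2 hs. apply hs. clear hs.
    set (Dw := Csub (Cmul (Csub w k11) (Csub w k22)) (Cmul k12 k21)).
    assert (hD : Dw <> C0).
    { assert (Dw = Cmul (Csub w lam) (Cadd w lam)).
      { unfold Dw. transitivity (Cadd (Csub (Cmul w w) (Cmul (Cadd k11 k22) w)) dl). unfold dl; ring.
        rewrite htr. transitivity (Csub (Cmul w w) (Cmul lam lam)). rewrite hlam; ring. ring. }
      rewrite H0. intro e. destruct (Cmul_eq0 _ _ e) as [e'|e'].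
      apply hw1. replace w with (Cadd (Csub w lam) lam) by ring. rewrite e'; ring.
      apply hw2. replace w with (Csub (Cadd w lam) lam) by ring. rewrite e'; ring. }
    set (a := Copp (Cinv w)).
    set (c11 := Cmul a (Cdiv (Csub w k22) Dw)). set (c12 := Cmul a (Cdiv k12 Dw)).
    set (c21 := Cmul a (Cdiv k21 Dw)). set (c22 := Cmul a (Cdiv (Csub w k11) Dw)).
    set (b1 := fun x => Cadd (Cmul c11 (phi1 x)) (Cmul c12 (phi2 x))).
    set (b2 := fun x => Cadd (Cmul c21 (phi1 x)) (Cmul c22 (phi2 x))).
    exists (fun x => lc [a; b1 x; b2 x] [x; Q1; Q2]).
    assert (hb1 : lin_fun H b1) by (apply lin_fun_comb; auto).
    assert (hb2 : lin_fun H b2) by (apply lin_fun_comb; auto).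
    split; [split|split].
    - simpl. apply lin_add. apply lin_scal, lin_id. apply lin_add. apply lin_rank1; auto.
      apply lin_add. apply lin_rank1; auto. apply lin_zero_fun.
    - exists (Cnorm a + (Cnorm c11 * K + Cnorm c12 * K) * hn Q1 + (Cnorm c21 * K + Cnorm c22 * K) * hn Q2).
      intro x. eapply Rle_trans. apply lc_norm. simpl.
      destruct (hK x) as [h1 h2].
      pose proof (Cnorm_comb c11 c12 _ _ _ _ h1 h2). pose proof (Cnorm_comb c21 c22 _ _ _ _ h1 h2).
      fold (b1 x) (b2 x) in *.
      pose proof (hnorm_ge0 H Q1). pose proof (hnorm_ge0 H Q2). pose proof (hnorm_ge0 H x). nra.
    - intro x.
      assert (ey : add (T x) (hopp H (sc w x)) = lc [Copp w; phi1 x; phi2 x] [x; Q1; Q2]).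
      { rewrite hT, opp_scal, hscal_assoc, (lc3_T _ _ x), (lc3_sx _ x Q1 Q2), lc3_add by auto.
        simpl zipadd. f_equal. f_equal; [ring| f_equal; [ring|f_equal; ring]]. }
      rewrite ey, (lc3_split _ _ _ _ x), lc_scal, lc3_add by auto.
      rewrite (lc_fun H b1 _ hb1), (lc_fun H b2 _ hb2). simpl map. simpl dotC. simpl zipadd.
      unfold b1, b2. fold k11 k12 k21 k22.
      transitivity (lc [C1; C0; C0] [x; Q1; Q2]); [| symmetry; apply lc3_x]. f_equal. f_equal.
      + unfold a. field. auto.
      + f_equal; [|f_equal]; unfold c11, c12, c21, c22, a, Dw, Cdiv in *; field; auto.
    - intro x. rewrite hT.
      rewrite (lc_fun H phi1 _ hp1), (lc_fun H phi2 _ hp2). simpl map. simpl dotC. fold k11 k12 k21 k22.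
      rewrite opp_scal, hscal_assoc, lc_scal, (lc3_T _ _ x), lc3_add by auto. simpl map. simpl zipadd.
      transitivity (lc [C1; C0; C0] [x; Q1; Q2]); [| symmetry; apply lc3_x]. f_equal. f_equal.
      + unfold a. field. auto.
      + unfold b1, b2. f_equal; [|f_equal]; unfold c11, c12, c21, c22, a, Dw, Cdiv in *; field; auto. }
  assert (s1 : spectrum H T lam) by (apply heig; auto).
  assert (s2 : spectrum H T (Copp lam)) by (apply heig; rewrite <- hlam; ring).
  assert (hrad : spectral_radius H T (Cnorm lam)).
  { apply (radius_intro H T _ lam); auto. intros w hw.
    destruct (classic (w = C0)) as [e|e]. rewrite e, Cnorm_0. apply Cnorm_ge0.
    destruct (classic (w = lam)) as [e'|e']. rewrite e'; lra.
    destruct (classic (w = Copp lam)) as [e''|e'']. rewrite e'', Cnorm_opp; lra.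
    exfalso; apply (sout w e e' e'' hw). }
  intros [z hz].
  assert (z1 : lam = z) by (apply hz; split; auto).
  assert (z2 : Copp lam = z) by (apply hz; split; auto; rewrite Cnorm_opp; auto).
  assert (e : lam = Copp lam) by congruence.
  assert (e2 : Cmul (RC 2) lam = C0).
  { transitivity (Cadd lam lam). apply Ceq; simpl; ring. rewrite e at 2. ring. }
  destruct (Cmul_eq0 _ _ e2) as [h|h]; [|auto]. unfold RC, C0 in h. injection h. lra.
Qed.
End Spec2.


Lemma F2_map {A B : Type} (P : A -> B -> Prop) f l : Forall2 P l (map f l) -> Forall (fun u => P u (f u)) l.
Proof. induction l; simpl; intro h; inversion h; subst; constructor; auto. Qed.

Lemma F2_F {A B : Type} (P R : A -> B -> Prop) (Q : A -> Prop) l ts :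
  Forall2 P l ts -> Forall Q l -> (forall u t, P u t -> Q u -> R u t) -> Forall2 R l ts.
Proof. intros h1; induction h1; intros h2 h3; inversion h2; subst; constructor; auto. Qed.

Section Solve.
Variable H : CHilbert.
Local Notation V := (hv H).
Local Notation "0v" := (hzero H).
Local Notation add := (hadd H).
Local Notation sc := (hscal H).
Local Notation ip := (hinner H).
Local Notation hn := (hnorm H).
Local Notation lc := (lincomb H).

Definition indepL (l : list V) : Prop :=
  forall cs, length cs = length l -> lc cs l = 0v -> Forall (fun c => c = C0) cs.

Lemma indepL_tail v l : indepL (v :: l) -> indepL l.
Proof.
  intros h cs hl e. specialize (h (C0 :: cs)). simpl in h.
  rewrite scal0, add0l in h. specialize (h (f_equal S hl) e). inversion h; auto.
Qed.

Lemma ip_lc_l l : forall cs q, Forall (fun u => ip u q = C0) l -> ip (lc cs l) q = C0.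
Proof.
  induction l as [|u l IH]; intros [|c cs] q hf; simpl; try apply ip_0l.
  inversion hf; subst. rewrite hinner_addl, hinner_scall, H2, IH; auto. ring.
Qed.

Lemma ip_lc_r l : forall cs q, Forall (fun u => ip q u = C0) l -> ip q (lc cs l) = C0.
Proof.
  induction l as [|u l IH]; intros [|c cs] q hf; simpl; try apply ip_0r.
  inversion hf; subst. rewrite ip_addr, ip_scalr, H2, IH; auto. ring.
Qed.

Lemma length_zipadd a b : length a = length b -> length (zipadd a b) = length a.
Proof. revert b; induction a; intros [|y b]; simpl; intros; auto; discriminate. Qed.

Lemma solve_gen l : indepL l -> forall ts, length ts = length l ->
  exists ys, length ys = length l /\ Forall2 (fun v t => ip v (lc ys l) = t) l ts.
Proof.
  induction l as [|v l IH]; intros hind ts hts.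
  - destruct ts; [|discriminate]. exists []. split; auto.
  - pose proof (indepL_tail _ _ hind) as hind'.
    destruct (IH hind' (map (fun u => ip u v) l)) as [ys' [hl' hf']]. apply length_map.
    set (q := lc (C1 :: map Copp ys') (v :: l)).
    assert (hq : q = add v (hopp H (lc ys' l))).
    { unfold q. simpl. rewrite hscal_1, lc_opp. auto. }
    assert (horth : Forall (fun u => ip u q = C0) l).
    { apply F2_map in hf'. rewrite hq. eapply Forall_impl; [|exact hf']. simpl. intros u hu.
      rewrite ip_addr, ip_oppr, hu. ring. }
    assert (hq0 : q <> 0v).
    { intro e. apply hind in e. inversion e. apply C1_neq_C0; auto. simpl. rewrite length_map. auto. }
    assert (hvq : ip v q = RC (Nv H q)).
    { rewrite <- ip_self. rewrite hq at 2. rewrite hinner_addl, ip_oppl.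
      rewrite (ip_lc_l l ys' q horth). ring. }
    assert (hN : 0 < Nv H q).
    { destruct (Nv_ge0 H q); auto. exfalso. apply hq0, Nv_eq0; auto. }
    destruct ts as [|t ts]; [discriminate|]. simpl in hts. injection hts; intro hts'.
    destruct (IH hind' ts hts') as [ys'' [hl'' hf'']].
    set (beta := Cconj (Cdiv (Csub t (ip v (lc ys'' l))) (RC (Nv H q)))).
    set (p := add (lc ys'' l) (sc beta q)).
    assert (hp : p = lc (beta :: zipadd ys'' (map (Cmul beta) (map Copp ys'))) (v :: l)).
    { unfold p, q. rewrite lc_scal. simpl. rewrite <- lc_add.
      2: auto. 2: rewrite !length_map; auto.
      replace (Cmul beta C1) with beta by ring.
      rewrite hadd_assoc, (hadd_comm _ (lc ys'' l) (sc beta v)), <- hadd_assoc. reflexivity. }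
    exists (beta :: zipadd ys'' (map (Cmul beta) (map Copp ys'))). split.
    { simpl. rewrite length_zipadd; auto. rewrite !length_map; congruence. }
    rewrite <- hp. constructor.
    + unfold p. rewrite ip_addr, ip_scalr, hvq. unfold beta. rewrite Cconj_invol.
      assert (RC (Nv H q) <> C0). { unfold RC, C0. intro e; injection e; lra. }
      field. auto.
    + eapply F2_F. exact hf''. exact horth. simpl. intros u t' h1 h2.
      unfold p. rewrite ip_addr, ip_scalr, h1, h2. ring.
Qed.

Lemma solve_nth l ts : indepL l -> length ts = length l ->
  exists p, Forall2 (fun v t => ip v p = t) l ts.
Proof. intros h hl. destruct (solve_gen l h ts hl) as [ys [_ hf]]. eauto. Qed.

End Solve.


Lemma F2_2 {A B : Type} (P : A -> B -> Prop) a b c d : Forall2 P [a;b] [c;d] -> P a c /\ P b d.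
Proof. intro h. inversion h; subst. inversion H4; subst. auto. Qed.
Lemma F2_3 {A B : Type} (P : A -> B -> Prop) a b c a' b' c' : Forall2 P [a;b;c] [a';b';c'] -> P a a' /\ P b b' /\ P c c'.
Proof. intro h. inversion h; subst. inversion H4; subst. inversion H6; subst. auto. Qed.
Lemma F2_4 {A B : Type} (P : A -> B -> Prop) a b c e a' b' c' e' : Forall2 P [a;b;c;e] [a';b';c';e'] -> P a a' /\ P b b' /\ P c c' /\ P e e'.
Proof. intro h. inversion h; subst. inversion H4; subst. inversion H6; subst. inversion H8; subst. auto. Qed.

Section Cons.
Variable H : CHilbert.
Local Notation V := (hv H).
Local Notation "0v" := (hzero H).
Local Notation add := (hadd H).
Local Notation sc := (hscal H).
Local Notation ip := (hinner H).
Local Notation lc := (lincomb H).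

Lemma indep2_iff u v : indepL H [u; v] <-> (forall a b, add (sc a u) (sc b v) = 0v -> a = C0 /\ b = C0).
Proof.
  split.
  - intros h a b e. assert (lc [a;b] [u;v] = 0v) by (simpl; rewrite hadd_0; auto).
    apply h in H0; auto. inversion H0; inversion H4; auto.
  - intros h [|a [|b [|c cs]]] hl e; try discriminate. simpl in e. rewrite hadd_0 in e.
    apply h in e. destruct e; subst. repeat constructor.
Qed.

Lemma not_indep l : ~ indepL H l -> exists cs, length cs = length l /\ lc cs l = 0v /\ ~ Forall (fun c => c = C0) cs.
Proof.
  intro h. apply NNPP. intro h2. apply h. intros cs hl e. apply NNPP. intro h3. apply h2. exists cs; auto.
Qed.

Lemma span3 u v w : indepL H [u; v] -> ~ indepL H [u; v; w] -> exists a b, w = add (sc a u) (sc b v).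
Proof.
  intros hi hn. apply not_indep in hn. destruct hn as [[|c1 [|c2 [|c3 [|c4 cs]]]] [hl [e hf]]]; try discriminate.
  simpl in e. rewrite hadd_0 in e.
  destruct (classic (c3 = C0)) as [h3|h3].
  - exfalso. subst. rewrite scal0, hadd_0 in e. apply (proj1 (indep2_iff u v) hi) in e. destruct e; subst.
    apply hf. repeat constructor.
  - exists (Copp (Cdiv c1 c3)), (Copp (Cdiv c2 c3)).
    apply (f_equal (sc (Copp (Cinv c3)))) in e. rewrite scalv0, !hscal_addv, !hscal_assoc in e.
    replace (Cmul (Copp (Cinv c3)) c3) with (Copp C1) in e by (field; auto).
    rewrite <- opp_scal in e.
    apply (f_equal (fun z => add z w)) in e. rewrite add0l in e. rewrite <- e.
    rewrite <- !hadd_assoc. rewrite (hadd_comm _ (hopp H w) w), hadd_opp, hadd_0.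
    unfold Cdiv. f_equal; f_equal; ring.
Qed.

Lemma span2 u v : ~ indepL H [u; v] -> u <> 0v -> exists c, v = sc c u.
Proof.
  intros hn hu. rewrite indep2_iff in hn. apply NNPP. intro hc. apply hn. intros a b e.
  destruct (classic (b = C0)) as [hb|hb].
  - subst. rewrite scal0, hadd_0 in e. split; auto. apply NNPP. intro ha. apply hu.
    rewrite <- (hscal_1 H u). replace C1 with (Cmul (Cinv a) a) by (field; auto). rewrite <- hscal_assoc, e, scalv0. auto.
  - exfalso. apply hc. exists (Copp (Cdiv a b)).
    apply (f_equal (sc (Copp (Cinv b)))) in e. rewrite scalv0, !hscal_addv, !hscal_assoc in e.
    replace (Cmul (Copp (Cinv b)) b) with (Copp C1) in e by (field; auto).
    rewrite <- opp_scal in e.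
    apply (f_equal (fun z => add z v)) in e. rewrite add0l in e. rewrite <- e.
    rewrite <- !hadd_assoc. rewrite (hadd_comm _ (hopp H v) v), hadd_opp, hadd_0.
    unfold Cdiv. f_equal; ring.
Qed.

Lemma dual2 u v : indepL H [u; v] -> exists p1 p2,
  ip u p1 = C1 /\ ip v p1 = C0 /\ ip u p2 = C0 /\ ip v p2 = C1.
Proof.
  intro h. destruct (solve_nth H [u;v] [C1;C0] h eq_refl) as [p1 f1].
  destruct (solve_nth H [u;v] [C0;C1] h eq_refl) as [p2 f2].
  apply F2_2 in f1. apply F2_2 in f2. exists p1, p2. tauto.
Qed.

Lemma ip_add_sc u v a b p : ip (add (sc a u) (sc b v)) p = Cadd (Cmul a (ip u p)) (Cmul b (ip v p)).
Proof. rewrite hinner_addl, !hinner_scall. auto. Qed.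

Lemma lc2_form a b u v : add (sc a u) (sc b v) = lc [a; b] [u; v].
Proof. simpl. rewrite hadd_0. auto. Qed.

Lemma lc2_zero u v : lc [C0; C0] [u; v] = 0v.
Proof. simpl. rewrite !scal0, !hadd_0. auto. Qed.

Definition cons_prop (S : V -> V) (n : nat) :=
  exists e1 e2 p1 p2 d,
  ip e1 p1 = C1 /\ ip e2 p1 = C0 /\ ip e1 p2 = C0 /\ ip e2 p2 = C1 /\
  Cadd (ip (S e1) p1) (Cmul (Cpow d n) (ip (S e2) p2)) = C0 /\
  Cmul (Csub (Cmul (ip (S e1) p1) (ip (S e2) p2)) (Cmul (ip (S e2) p1) (ip (S e1) p2))) (Cpow d n) <> C0.

Lemma m1_neq0 : Copp C1 <> C0.
Proof. unfold C1, C0, Copp; intro e; injection e; lra. Qed.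

Lemma construct (S : V -> V) n : linear_op H S -> (1 <= n)%nat ->
  (exists x1 x2, indepL H [S x1; S x2]) -> cons_prop S n.
Proof.
  intros hS hn [x1 [x2 hx]].
  pose proof hS as [Sa Ss].
  destruct (root_m1 n hn) as [om hom].
  destruct (classic (exists x, indepL H [x; S x; S (S x)])) as [[x hA]|notA].
  {
    destruct (solve_nth H _ [C1;C0;C1] hA eq_refl) as [p1 f1].
    destruct (solve_nth H _ [C0;C1;C0] hA eq_refl) as [p2 f2].
    apply F2_3 in f1. apply F2_3 in f2. destruct f1 as [a1 [a2 a3]]. destruct f2 as [b1 [b2 b3]].
    exists x, (S x), p1, p2, C1. rewrite Cpow_1.
    repeat split; auto. rewrite a2, b3. ring.
    rewrite a2, a3, b3, b2. intro e. apply m1_neq0. rewrite <- e. ring. }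
  destruct (classic (exists x, indepL H [x; S x] /\ exists a b, a <> C0 /\ S (S x) = add (sc a x) (sc b (S x))))
    as [[x [hi [a [b [ha e2]]]]]|notB].
  {
    set (h := Cmul b (Cinv (Cadd C1 C1))).
    assert (hh : b = Cadd h h).
    { unfold h. field. unfold C1, Cadd, C0. intro e; injection e; lra. }
    rewrite hh in e2. clearbody h. clear hh.
    set (y := add (S x) (sc (Copp h) x)).
    assert (hiy : indepL H [x; y]).
    { rewrite indep2_iff in *. intros c1 c2 e. unfold y in e.
      rewrite hscal_addv, hscal_assoc, hadd_assoc, (hadd_comm _ (sc c1 x)), <- hadd_assoc, <- hscal_adds in e.
      rewrite hadd_comm in e. apply hi in e. destruct e as [e1 e3]. subst. split; auto.
      rewrite <- e1. ring. }
    destruct (dual2 _ _ hiy) as [p1 [p2 [h11 [h21 [h12 h22]]]]].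
    assert (eSx : S x = add (sc h x) (sc C1 y)).
    { unfold y. rewrite hscal_1, (hadd_comm _ (S x)), hadd_assoc, <- hscal_adds.
      replace (Cadd h (Copp h)) with C0 by ring. rewrite scal0, add0l. auto. }
    assert (ip (S x) p1 = h) by (rewrite eSx, ip_add_sc, h11, h21; ring).
    assert (ip (S x) p2 = C1) by (rewrite eSx, ip_add_sc, h12, h22; ring).
    assert (eSy : S y = add (sc a x) (sc (Cadd (Cadd h h) (Copp h)) (S x))).
    { unfold y. rewrite Sa, Ss, e2, !hscal_adds. rewrite <- !hadd_assoc. auto. }
    exists x, y, p1, p2, om. rewrite hom.
    repeat split; auto.
    - rewrite eSy, ip_add_sc, H0, H1, h12. ring.
    - rewrite eSy, !ip_add_sc, H0, H1, h11, h12.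
      intro e. apply ha. rewrite <- e. ring. }
  assert (hbx : forall x, exists b, S (S x) = sc b (S x)).
  { intro x. destruct (classic (indepL H [x; S x])) as [hi|hni].
    - destruct (span3 _ _ _ hi (fun h => notA (ex_intro _ x h))) as [a [b e]].
      destruct (classic (a = C0)) as [ha|ha].
      + exists b. rewrite e, ha, scal0, add0l. auto.
      + exfalso. apply notB. exists x. split; auto. exists a, b. auto.
    - destruct (classic (x = 0v)) as [h0|h0].
      + exists C0. rewrite h0, !(lin_zero H S hS). rewrite scalv0. auto.
      + destruct (span2 _ _ hni h0) as [c e]. exists c. rewrite e, Ss, e. auto. }
  destruct (hbx x1) as [b1 e1]. destruct (hbx x2) as [b2 e2]. destruct (hbx (add x1 x2)) as [b3 e3].
  rewrite Sa, Sa, e1, e2, hscal_addv in e3.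
  assert (hb : b1 = b3 /\ b2 = b3).
  { rewrite indep2_iff in hx. assert (add (sc (Csub b1 b3) (S x1)) (sc (Csub b2 b3) (S x2)) = 0v).
    { rewrite lc2_form. rewrite !lc2_form in e3.
      transitivity (add (lc [b1; b2] [S x1; S x2]) (lc [Copp b3; Copp b3] [S x1; S x2])).
      rewrite lc_add by auto. simpl zipadd. auto.
      rewrite e3, lc_add by auto. simpl zipadd. rewrite <- (lc2_zero (S x1) (S x2)). f_equal. f_equal; [|f_equal]; ring. }
    apply hx in H0. destruct H0. split; [replace b1 with (Cadd (Csub b1 b3) b3) by ring | replace b2 with (Cadd (Csub b2 b3) b3) by ring]; rewrite ?H0, ?H1; ring. }
  destruct hb as [hb1 hb2]. rewrite <- hb1 in hb2. subst b3 b2. clear e3.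
  destruct (classic (b1 = C0)) as [hb0|hb0].
  -
    subst b1. rewrite scal0 in e1, e2.
    assert (hi4 : indepL H [x1; x2; S x1; S x2]).
    { intros [|a1 [|a2 [|a3 [|a4 [|a5 cs]]]]] hl e; try discriminate.
      assert (eS := f_equal S e). rewrite (lc_lin H S _ hS), (lin_zero H S hS) in eS. simpl map in eS.
      rewrite e1, e2 in eS. simpl in eS. rewrite !scalv0, !hadd_0 in eS.
      rewrite indep2_iff in hx. apply hx in eS. destruct eS; subst.
      simpl in e. rewrite !scal0, !add0l, hadd_0 in e. apply hx in e. destruct e; subst.
      repeat constructor. }
    destruct (solve_nth H _ [C1;C0;C0;C1] hi4 eq_refl) as [p1 f1].
    destruct (solve_nth H _ [C0;C1;C1;C0] hi4 eq_refl) as [p2 f2].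
    apply F2_4 in f1. apply F2_4 in f2. destruct f1 as [a1 [a2 [a3 a4]]]. destruct f2 as [c1 [c2 [c3 c4]]].
    exists x1, x2, p1, p2, C1. rewrite Cpow_1. repeat split; auto.
    rewrite a3, c4. ring.
    rewrite a3, a4, c3, c4. intro e. apply m1_neq0. rewrite <- e. ring.
  -
    destruct (dual2 _ _ hx) as [p1 [p2 [h11 [h21 [h12 h22]]]]].
    exists (S x1), (S x2), p1, p2, om. rewrite hom. repeat split; auto.
    rewrite e1, e2, !hinner_scall, h11, h22. ring.
    rewrite e1, e2, !hinner_scall, h11, h22, h21, h12. intro e. apply hb0.
    assert (Copp (Cmul b1 b1) = C0) by (rewrite <- e; ring).
    assert (Cmul b1 b1 = C0) by (replace (Cmul b1 b1) with (Copp (Copp (Cmul b1 b1))) by ring; rewrite H0; ring).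
    destruct (Cmul_eq0 _ _ H1); auto.
Qed.

End Cons.


Section Main.
Variable H : CHilbert.
Local Notation V := (hv H).
Local Notation "0v" := (hzero H).
Local Notation add := (hadd H).
Local Notation sc := (hscal H).
Local Notation ip := (hinner H).
Local Notation hn := (hnorm H).
Local Notation lc := (lincomb H).

Lemma bnd_pos (f : V -> V) : (exists M, forall x, hn (f x) <= M * hn x) ->
  exists M, 0 <= M /\ forall x, hn (f x) <= M * hn x.
Proof.
  intros [M hM]. exists (Rmax M 0). split. apply Rmax_r. intro x. eapply Rle_trans. apply hM.
  apply Rmult_le_compat_r. apply hnorm_ge0. apply Rmax_l.
Qed.

Lemma adj_bounded (A S : V -> V) : bounded_op H A -> is_adjoint H A S ->
  exists M, 0 <= M /\ forall z, hn (S z) <= M * hn z.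
Proof.
  intros [_ hb] hadj. destruct (bnd_pos A hb) as [M [hM0 hM]]. exists M. split; auto. intro z.
  pose proof (hadj (S z) z) as e.
  assert (Nv H (S z) <= hn (A (S z)) * hn z).
  { unfold Nv. rewrite <- e. apply fst_le_norm. }
  pose proof (hM (S z)). pose proof (hnorm_sq H (S z)). pose proof (hnorm_ge0 H (S z)).
  pose proof (hnorm_ge0 H z). pose proof (hnorm_ge0 H (A (S z))).
  destruct (Req_dec (hn (S z)) 0) as [h0|h0]. rewrite h0. nra.
  assert (hn (S z) * hn (S z) <= hn (S z) * (M * hn z)) by nra.
  apply Rmult_le_reg_l with (hn (S z)). lra. lra.
Qed.

Lemma opow_lin (B : V -> V) n : linear_op H B -> linear_op H (opow H n B).
Proof.
  intro hB. induction n; simpl. apply lin_id. apply (lin_comp H B (opow H n B)); auto.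
Qed.

Lemma opow_bnd (B : V -> V) n : bounded_op H B -> exists M, 0 <= M /\ forall x, hn (opow H n B x) <= M * hn x.
Proof.
  intros [hl hb]. destruct (bnd_pos B hb) as [M [hM0 hM]].
  induction n; simpl.
  - exists 1. split. lra. intro; lra.
  - destruct IHn as [Mn [h0 hn']]. exists (M * Mn). split. nra. intro x.
    eapply Rle_trans. apply hM. rewrite Rmult_assoc. apply Rmult_le_compat_l; auto.
Qed.

Lemma rank1_adj (A S : V -> V) (y : V) : (forall x, exists c, A x = sc c y) -> is_adjoint H A S ->
  exists w, forall z, S z = sc (ip z y) w.
Proof.
  intros hA hadj.
  destruct (classic (y = 0v)) as [hy|hy].
  - exists 0v. intro z. rewrite scalv0. apply ip_ext. intro x. rewrite <- hadj, ip_0r.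
    destruct (hA x) as [c e]. rewrite e, hy, scalv0, ip_0l. auto.
  - assert (hN : 0 < Nv H y). { destruct (Nv_ge0 H y); auto. exfalso; apply hy, Nv_eq0; auto. }
    set (y0 := sc (RC (/ Nv H y)) y).
    assert (hyy0 : ip y y0 = C1).
    { unfold y0. rewrite ip_scalr, ip_self. unfold RC, C1. apply Ceq; simpl; field; lra. }
    exists (S y0). intro z. apply ip_ext. intro x.
    rewrite ip_scalr, <- !hadj. destruct (hA x) as [c e]. rewrite e, !hinner_scall, hyy0.
    rewrite (hinner_conj H y z), Cconj_invol. ring.
Qed.

Lemma rank_le1_form (A : V -> V) : rank_le H 1 A -> exists y, forall x, exists c, A x = sc c y.
Proof.
  intros [[|y [|y' ys]] [hl h]]; try discriminate. exists y. intro x.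
  destruct (h x) as [[|c [|c' cs]] [hcl e]]; try discriminate. exists c. rewrite e. simpl. apply hadd_0.
Qed.

Lemma forward (Alg : (V -> V) -> Prop) r s (A : V -> V) :
  dim_ge2 H -> standard_op_alg H Alg -> Alg A -> rank_one H A ->
  forall B, Alg B -> periph_singleton H (fun x => opow H r B (adjoint H A (opow H s B x))).
Proof.
  intros hdim hAlg hA [h1 _] B hB.
  destruct hAlg as [hbd _].
  pose proof (adjoint_spec H A (hbd A hA)) as hadj.
  destruct (rank_le1_form A h1) as [y hy].
  destruct (rank1_adj A _ y hy hadj) as [w hw].
  pose proof (hbd B hB) as hBb. pose proof (proj1 hBb) as hBl.
  apply (spec1 H _ (fun x => ip (opow H s B x) y) (opow H r B w) hdim).
  - split. intros. rewrite (proj1 (opow_lin B s hBl)), hinner_addl. auto.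
    intros. rewrite (proj2 (opow_lin B s hBl)), hinner_scall. auto.
  - intro x. simpl. rewrite hw, (proj2 (opow_lin B r hBl)). auto.
  - destruct (opow_bnd B s hBb) as [Ms [h0 hMs]].
    exists (Ms * hn y * hn (opow H r B w)). intro x. rewrite hw, (proj2 (opow_lin B r hBl)), hnorm_scal.
    pose proof (Cnorm_ip H (opow H s B x) y). pose proof (hMs x).
    pose proof (hnorm_ge0 H y). pose proof (hnorm_ge0 H (opow H r B w)). pose proof (hnorm_ge0 H x).
    pose proof (hnorm_ge0 H (opow H s B x)).
    apply Rle_trans with (hn (opow H s B x) * hn y * hn (opow H r B w)). apply Rmult_le_compat_r; auto.
    assert (hn (opow H s B x) * hn y <= Ms * hn x * hn y) by (apply Rmult_le_compat_r; auto).
    replace (Ms * hn y * hn (opow H r B w) * hn x) with (Ms * hn x * hn y * hn (opow H r B w)) by ring.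
    apply Rmult_le_compat_r; auto.
Qed.

End Main.


Section Back.
Variable H : CHilbert.
Local Notation V := (hv H).
Local Notation "0v" := (hzero H).
Local Notation add := (hadd H).
Local Notation sc := (hscal H).
Local Notation ip := (hinner H).
Local Notation hn := (hnorm H).
Local Notation lc := (lincomb H).

Lemma adj_sym (A S : V -> V) : is_adjoint H A S -> is_adjoint H S A.
Proof.
  intros h x y. rewrite (hinner_conj H y (S x)), <- h, (hinner_conj H (A y) x). auto.
Qed.

Lemma get_indep (A S : V -> V) : is_adjoint H A S -> linear_op H S -> ~ rank_le H 1 A ->
  exists x1 x2, indepL H [S x1; S x2].
Proof.
  intros hadj hS hA. apply NNPP. intro hn0. apply hA.
  destruct (classic (forall z, S z = 0v)) as [hz|hz].
  - exists [0v]. split; auto. intro x. exists [C0]. split; auto. simpl. rewrite scal0, hadd_0.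
    apply ip_ext_l. intro z. rewrite hadj, hz, ip_0r, ip_0l. auto.
  - apply not_all_ex_not in hz. destruct hz as [z0 hz0].
    assert (hS1 : forall z, exists c, S z = sc c (S z0)).
    { intro z. apply span2; auto. intro hi. apply hn0. eauto. }
    destruct (rank1_adj H S A (S z0) hS1 (adj_sym A S hadj)) as [w hw].
    exists [w]. split; auto. intro x. exists [ip x (S z0)]. split; auto. simpl. rewrite hadd_0. auto.
Qed.

Lemma ip_bound p : forall x, Cnorm (ip x p) <= hn p * hn x.
Proof. intro x. rewrite Rmult_comm. apply Cnorm_ip. Qed.

Lemma lin_fun_sc c phi : lin_fun H phi -> lin_fun H (fun x => Cmul c (phi x)).
Proof. intros [a s]. split; intros. rewrite a; ring. rewrite s; ring. Qed.

Lemma lin_fun_S (S : V -> V) p : linear_op H S -> lin_fun H (fun x => ip (S x) p).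
Proof. intros [a s]. split; intros. rewrite a, hinner_addl; auto. rewrite s, hinner_scall; auto. Qed.

Lemma two_bounds (f g : V -> CC) K1 K2 : (forall x, Cnorm (f x) <= K1 * hn x) -> (forall x, Cnorm (g x) <= K2 * hn x) ->
  exists K, forall x, Cnorm (f x) <= K * hn x /\ Cnorm (g x) <= K * hn x.
Proof.
  intros h1 h2. exists (Rabs K1 + Rabs K2). intro x. pose proof (hnorm_ge0 H x).
  pose proof (Rle_abs K1). pose proof (Rle_abs K2). pose proof (Rabs_pos K1). pose proof (Rabs_pos K2).
  split. eapply Rle_trans. apply h1. nra. eapply Rle_trans. apply h2. nra.
Qed.

Lemma bnd_sc c (f : V -> CC) K : (forall x, Cnorm (f x) <= K * hn x) -> forall x, Cnorm (Cmul c (f x)) <= (Cnorm c * K) * hn x.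
Proof. intros h x. rewrite Cnorm_mul, Rmult_assoc. apply Rmult_le_compat_l. apply Cnorm_ge0. auto. Qed.

Lemma bnd_comb c1 c2 (f g : V -> CC) K1 K2 : (forall x, Cnorm (f x) <= K1 * hn x) -> (forall x, Cnorm (g x) <= K2 * hn x) ->
  forall x, Cnorm (Cadd (Cmul c1 (f x)) (Cmul c2 (g x))) <= (Cnorm c1 * K1 + Cnorm c2 * K2) * hn x.
Proof.
  intros h1 h2 x. eapply Rle_trans. apply Cnorm_triangle. pose proof (bnd_sc c1 f K1 h1 x). pose proof (bnd_sc c2 g K2 h2 x).
  lra.
Qed.

Lemma backward (Alg : (V -> V) -> Prop) r s (A : V -> V) :
  standard_op_alg H Alg -> (1 <= r + s)%nat -> Alg A -> ~ (forall x, A x = 0v) ->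
  (forall B, Alg B -> rank_le H 2 B -> periph_singleton H (fun x => opow H r B (adjoint H A (opow H s B x)))) ->
  rank_one H A.
Proof.
  intros hAlg hrs hA hA0 h3.
  pose proof hAlg as [hbd [_ [_ [_ hfin]]]].
  split.
  2:{ intros [ys [hl h]]. apply hA0. intro x. destruct (h x) as [cs [_ e]]. rewrite e.
      destruct ys; [|discriminate]. destruct cs; auto. }
  apply NNPP. intro hr1.
  set (S := adjoint H A).
  pose proof (adjoint_spec H A (hbd A hA)) as hadj. fold S in hadj.
  pose proof (adjoint_linear H A S hadj) as hSl.
  destruct (adj_bounded H A S (hbd A hA) hadj) as [MS [hMS0 hMS]].
  destruct (get_indep A S hadj hSl hr1) as [x1 [x2 hx]].
  destruct (construct H S (r + s) hSl hrs (ex_intro _ x1 (ex_intro _ x2 hx)))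
    as [e1 [e2 [p1 [p2 [d [h11 [h21 [h12 [h22 [htr hdet]]]]]]]]]].
  set (M11 := ip (S e1) p1) in *. set (M12 := ip (S e2) p1) in *.
  set (M21 := ip (S e1) p2) in *. set (M22 := ip (S e2) p2) in *.
  set (B := fun x => add (sc (ip x p1) e1) (sc (Cmul d (ip x p2)) e2)).
  assert (hBl : linear_op H B).
  { apply lin_add; apply lin_rank1. apply lin_ip. apply lin_fun_sc, lin_ip. }
  assert (hBb : bounded_op H B).
  { split; auto. exists (hn p1 * hn e1 + Cnorm d * hn p2 * hn e2). intro x. unfold B.
    eapply Rle_trans. apply hnorm_tri. rewrite !hnorm_scal, Cnorm_mul.
    pose proof (ip_bound p1 x). pose proof (ip_bound p2 x). pose proof (Cnorm_ge0 d).
    pose proof (hnorm_ge0 H e1). pose proof (hnorm_ge0 H e2). pose proof (Cnorm_ge0 (ip x p2)).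
    pose proof (Cnorm_ge0 (ip x p1)).
    assert (Cnorm (ip x p1) * hn e1 <= hn p1 * hn x * hn e1) by (apply Rmult_le_compat_r; auto).
    assert (Cnorm (ip x p2) * hn e2 <= hn p2 * hn x * hn e2) by (apply Rmult_le_compat_r; auto).
    assert (Cnorm d * (Cnorm (ip x p2) * hn e2) <= Cnorm d * (hn p2 * hn x * hn e2)) by (apply Rmult_le_compat_l; auto).
    nra. }
  assert (hB2 : rank_le H 2 B).
  { exists [e1; e2]. split; auto. intro x. exists [ip x p1; Cmul d (ip x p2)]. split; auto.
    unfold B; simpl. rewrite hadd_0. auto. }
  assert (hBA : Alg B) by (apply hfin; auto; exists 2%nat; auto).
  specialize (h3 B hBA hB2).
  assert (hpow : forall k x, opow H (Datatypes.S k) B x = add (sc (ip x p1) e1) (sc (Cmul (Cpow d (Datatypes.S k)) (ip x p2)) e2)).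
  { induction k; intro x.
    - simpl. unfold B. f_equal. f_equal. ring.
    - change (opow H (Datatypes.S (Datatypes.S k)) B x) with (B (opow H (Datatypes.S k) B x)). rewrite IHk. unfold B.
      rewrite !ip_add_sc, h11, h21, h12, h22. f_equal; f_equal. ring. simpl. ring. }
  assert (hSf : forall a b, S (add (sc a e1) (sc b e2)) = add (sc a (S e1)) (sc b (S e2))).
  { intros a b. destruct hSl as [Sa Ss]. rewrite Sa, !Ss. auto. }
  revert h3. fold S.
  destruct r as [|r']; destruct s as [|s']; simpl in hrs; try lia.
  -
    apply (spec2 H _ (fun x => ip x p1) (fun x => Cmul (Cpow d (Datatypes.S s')) (ip x p2)) (S e1) (S e2)).
    + apply lin_ip.
    + apply lin_fun_sc, lin_ip.
    + eapply two_bounds. apply ip_bound. apply bnd_sc, ip_bound.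
    + intro x. rewrite hpow. cbn [opow]. rewrite hSf. auto.
    + fold M11 M22. rewrite <- htr. simpl. ring.
    + fold M11 M12 M21 M22. intro e. apply hdet. rewrite <- e. simpl. ring.
  -
    apply (spec2 H _ (fun x => ip (S x) p1) (fun x => Cmul (Cpow d (Datatypes.S r')) (ip (S x) p2)) e1 e2).
    + apply lin_fun_S; auto.
    + apply lin_fun_sc, lin_fun_S; auto.
    + assert (hipS : forall p x, Cnorm (ip (S x) p) <= (MS * hn p) * hn x).
      { intros p x. eapply Rle_trans. apply Cnorm_ip.
        replace (MS * hn p * hn x) with ((MS * hn x) * hn p) by ring.
        apply Rmult_le_compat_r. apply hnorm_ge0. apply hMS. }
      eapply two_bounds. apply (hipS p1). apply bnd_sc, (hipS p2).
    + intro x. rewrite hpow. cbn [opow]. auto.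
    + fold M11 M22. rewrite <- htr. rewrite Nat.add_0_r. ring.
    + fold M11 M12 M21 M22. intro e. apply hdet. rewrite <- e. rewrite Nat.add_0_r. ring.
  -
    set (ds := Cpow d (Datatypes.S s')). set (dr := Cpow d (Datatypes.S r')).
    apply (spec2 H _ (fun x => Cadd (Cmul M11 (ip x p1)) (Cmul (Cmul ds M12) (ip x p2)))
                     (fun x => Cmul dr (Cadd (Cmul M21 (ip x p1)) (Cmul (Cmul ds M22) (ip x p2)))) e1 e2).
    + apply lin_fun_comb; apply lin_ip.
    + apply lin_fun_sc, lin_fun_comb; apply lin_ip.
    + eapply two_bounds. apply bnd_comb; apply ip_bound. apply bnd_sc, bnd_comb; apply ip_bound.
    + intro x. rewrite !hpow, hSf. fold M11 M12 M21 M22 ds dr.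
      rewrite !ip_add_sc. fold M11 M12 M21 M22. f_equal; f_equal; ring.
    + rewrite h11, h21, h12, h22. rewrite Cpow_add in htr. fold dr ds in htr. transitivity (Cadd M11 (Cmul (Cmul dr ds) M22)); [ring | exact htr].
    + rewrite h11, h21, h12, h22. rewrite Cpow_add in hdet. fold dr ds in hdet. intro e. apply hdet. rewrite <- e. ring.
Qed.

End Back.


Theorem lemma3p3 (H : CHilbert) (Alg : (H -> H) -> Prop) (r s : nat) (A : H -> H) :
  dim_ge2 H ->
  @standard_op_alg H Alg ->
  (1 <= r + s)%nat ->
  Alg A ->
  ~ (forall x, A x = hzero H) ->
  (@rank_one H A <->
     (forall B, Alg B ->
        @periph_singleton H (fun x => @opow H r B (@adjoint H A (@opow H s B x))))) /\
  (@rank_one H A <->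
     (forall B, Alg B -> @rank_le H 2 B ->
        @periph_singleton H (fun x => @opow H r B (@adjoint H A (@opow H s B x))))).
Proof.
  intros hdim hAlg hrs hA hA0.
  pose proof (forward H Alg r s A hdim hAlg hA) as fw.
  pose proof (backward H Alg r s A hAlg hrs hA hA0) as bw.
  split; split.
  - intros h1 B hB. apply fw; auto.
  - intro h2. apply bw. intros B hB _. apply h2; auto.
  - intros h1 B hB _. apply fw; auto.
  - intro h3. apply bw. exact h3.
Qed.
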